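(* There exist metric spaces $X,Y$ and a Lipschitz function $f\colon X\to Y$ such that $\operatorname{asdim}(Y)=0$ and $\sup\{\operatorname{asdim}(f^{-1}(B)) : B\subset Y \text{ bounded}\}=0$, but $\operatorname{asdim}(X)>0$.
   Context: For a metric space $Z$, $\operatorname{asdim}(Z)\le n$ iff for every $r>0$ there are $D<\infty$ and families $\mathcal U_1,\dots,\mathcal U_{n+1}$ of subsets of $Z$ covering $Z$, each $r$-disjoint (points in different members of a family are at distance $\ge r$), with members of diameter $\le D$; $\operatorname{asdim}(Z)$ is the least such $n$. *)

(* Defs.v *)
From Stdlib Require Import Reals.
Open Scope R_scope.

Record MetricSpace := {
  mcarrier :> Type;
  mdist : mcarrier -> mcarrier -> R;
  mdist_ge0 : forall x y, 0 <= mdist x y;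
  mdist_eq0 : forall x y, mdist x y = 0 <-> x = y;
  mdist_sym : forall x y, mdist x y = mdist y x;
  mdist_tri : forall x y z, mdist x z <= mdist x y + mdist y z
}.

Arguments mdist {m} _ _.

Definition family (X : MetricSpace) := (X -> Prop) -> Prop.

Definition r_disjoint (X : MetricSpace) (r : R) (F : family X) : Prop :=
  forall U V, F U -> F V -> U <> V ->
    forall x y, U x -> V y -> r <= mdist x y.

Definition diam_bounded (X : MetricSpace) (D : R) (F : family X) : Prop :=
  forall U, F U -> forall x y, U x -> U y -> mdist x y <= D.

Definition asdim_le_on (X : MetricSpace) (A : X -> Prop) (n : nat) : Prop :=
  forall r : R, 0 < r ->
    exists (D : R) (F : nat -> family X),
      (forall i, (i <= n)%nat -> r_disjoint X r (F i)) /\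
      (forall i, (i <= n)%nat -> diam_bounded X D (F i)) /\
      (forall i, (i <= n)%nat -> forall U, F i U -> forall x, U x -> A x) /\
      (forall z, A z -> exists i U, (i <= n)%nat /\ F i U /\ U z).

Definition asdim_le (X : MetricSpace) (n : nat) : Prop :=
  asdim_le_on X (fun _ => True) n.

Definition bounded_set (X : MetricSpace) (B : X -> Prop) : Prop :=
  exists R0 : R, forall x y, B x -> B y -> mdist x y <= R0.

Definition lipschitz (X Y : MetricSpace) (f : X -> Y) : Prop :=
  exists L : R, 0 <= L /\ forall x x', mdist (f x) (f x') <= L * mdist x x'.

(* Main.v *)
Require Import Defs.
From Stdlib Require Import Reals.
From Stdlib Require Import Arith Lia Lra Classical.

Definition dn (a b : nat) : nat := ((a - b) + (b - a))%nat.

Section MS.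
Variable T : Type.
Variable g : T -> nat.
Hypothesis ginj : forall x y, g x = g y -> x = y.

Lemma mk_ge0 : forall x y : T, (0 <= INR (dn (g x) (g y)))%R.
Proof. intros; apply pos_INR. Qed.
Lemma mk_eq0 : forall x y : T, INR (dn (g x) (g y)) = 0%R <-> x = y.
Proof.
  intros x y; split; intro H.
  - apply ginj. change 0%R with (INR 0) in H. apply INR_eq in H. unfold dn in H. lia.
  - subst. unfold dn. replace (g y - g y + (g y - g y))%nat with 0%nat by lia. reflexivity.
Qed.
Lemma mk_sym : forall x y : T, INR (dn (g x) (g y)) = INR (dn (g y) (g x)).
Proof. intros; unfold dn; f_equal; lia. Qed.
Lemma mk_tri : forall x y z : T,
  (INR (dn (g x) (g z)) <= INR (dn (g x) (g y)) + INR (dn (g y) (g z)))%R.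
Proof. intros; rewrite <- plus_INR; apply le_INR; unfold dn; lia. Qed.

Definition mkMS : MetricSpace :=
  {| mcarrier := T; mdist := fun x y => INR (dn (g x) (g y));
     mdist_ge0 := mk_ge0; mdist_eq0 := mk_eq0; mdist_sym := mk_sym; mdist_tri := mk_tri |}.
End MS.

Definition XT := {p : nat * nat | (snd p <= fst p)%nat}.
Definition gX (p : XT) : nat := (fst (proj1_sig p) * fst (proj1_sig p) + snd (proj1_sig p))%nat.

Lemma gX_inj : forall x y, gX x = gX y -> x = y.
Proof.
  intros [[n k] h] [[m j] h']; unfold gX; simpl in *; intro E.
  assert (n = m).
  { destruct (lt_eq_lt_dec n m) as [[L|L]|L]; auto.
    - assert (m * m >= n * n + 2 * n + 1)%nat by nia. lia.
    - assert (n * n >= m * m + 2 * m + 1)%nat by nia. lia. }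
  subst m. assert (k = j) by lia. subst j. f_equal. apply le_unique.
Qed.

Definition gY (n : nat) : nat := (n * n)%nat.
Lemma gY_inj : forall x y, gY x = gY y -> x = y.
Proof.
  unfold gY; intros n m E.
  destruct (lt_eq_lt_dec n m) as [[L|L]|L]; auto.
  - assert (m * m >= n * n + 2 * n + 1)%nat by nia. lia.
  - assert (n * n >= m * m + 2 * m + 1)%nat by nia. lia.
Qed.

Definition Xs := mkMS XT gX gX_inj.
Definition Ys := mkMS nat gY gY_inj.
Definition fXY (p : Xs) : Ys := fst (proj1_sig p).

Lemma far_sq : forall x y N, (x < y)%nat -> (N <= y)%nat -> (N <= y * y - x * x)%nat.
Proof. intros. assert (y * y >= x * x + y)%nat by nia. lia. Qed.

Theorem mainTheorem12 :
  exists (X Y : MetricSpace) (f : X -> Y),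
    lipschitz X Y f /\
    asdim_le Y 0 /\
    (forall B : Y -> Prop, bounded_set Y B ->
       asdim_le_on X (fun x => B (f x)) 0) /\
    ~ asdim_le X 0.
Proof.
  exists Xs, Ys, fXY. split; [|split; [|split]].
  - exists 2%R. split; [lra|].
    intros [[n k] h] [[m j] h']. simpl. unfold fXY, gY, gX; simpl in *.
    replace 2%R with (INR 2) by (simpl; lra). rewrite <- mult_INR. apply le_INR.
    unfold dn.
    destruct (lt_eq_lt_dec n m) as [[L|L]|L].
    + assert (m * m >= n * n + 2 * n + 1)%nat by nia. lia.
    + subst. lia.
    + assert (n * n >= m * m + 2 * m + 1)%nat by nia. lia.
  - intros r Hr. destruct (INR_unbounded r) as [N0 HN0]. set (N := S N0).
    assert (HN : (r <= INR N)%R) by (unfold N; rewrite S_INR; lra).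
    exists (INR (N * N)), (fun _ U => U = (fun y : Ys => (y < N)%nat) \/
                              exists m, (N <= m)%nat /\ U = (fun y : Ys => y = m)).
    split; [|split; [|split]].
    + intros i _ U V HU HV UV x y Ux Vy. simpl. unfold gY.
      apply Rle_trans with (INR N); auto. apply le_INR.
      destruct HU as [HU|[a [Ha HU]]]; destruct HV as [HV|[b [Hb HV]]]; subst U V.
      * exfalso; apply UV; reflexivity.
      * simpl in *. subst y. pose proof (far_sq x b N (Nat.lt_le_trans _ _ _ Ux Hb) Hb) as Hh. unfold dn. lia.
      * simpl in *. subst x. pose proof (far_sq y a N (Nat.lt_le_trans _ _ _ Vy Ha) Ha). unfold dn. lia.
      * simpl in *. subst x y. destruct (lt_eq_lt_dec a b) as [[L|L]|L].
        -- pose proof (far_sq a b N L Hb). unfold dn; lia.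
        -- subst; exfalso; apply UV; reflexivity.
        -- pose proof (far_sq b a N L Ha). unfold dn; lia.
    + intros i _ U HU x y Ux Uy. change (INR (dn (gY x) (gY y)) <= INR (N * N))%R. unfold gY. apply le_INR.
      destruct HU as [HU|[a [Ha HU]]]; subst U; simpl in *.
      * assert (x * x <= N * N)%nat by nia. assert (y * y <= N * N)%nat by nia. unfold dn; lia.
      * subst; unfold dn; lia.
    + auto.
    + intros z _. exists 0%nat. destruct (lt_dec z N) as [L|L].
      * exists (fun y : Ys => (y < N)%nat). split; [lia|]. split; [left; reflexivity|exact L].
      * exists (fun y : Ys => y = z). split; [lia|]. split; [right; exists z; split; [lia|reflexivity]|reflexivity].
  - intros B [R0 HB] r Hr.
    destruct (classic (exists b0, B b0)) as [[b0 Hb0]|NB].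
    + exists (3 * R0 + 2 * INR (b0 * b0))%R, (fun _ U => U = (fun x : Xs => B (fXY x))).
      split; [|split; [|split]].
      * intros i _ U V HU HV UV. exfalso. apply UV. congruence.
      * intros i _ U HU x y Ux Uy. subst U.
        destruct x as [[n k] h]; destruct y as [[m j] h']. unfold fXY in *; simpl in *.
        pose proof (HB n m Ux Uy) as E1. pose proof (HB n b0 Ux Hb0) as E2.
        pose proof (HB m b0 Uy Hb0) as E3. simpl in E1, E2, E3. unfold gY in *. unfold gX; simpl.
        assert (Hn : (dn (n*n+k) (m*m+j) <= dn (n*n) (m*m) + dn (n*n) (b0*b0) + dn (m*m) (b0*b0) + 2 * (b0*b0))%nat).
        { assert (n <= n * n)%nat by nia. assert (m <= m * m)%nat by nia. unfold dn; lia. }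
        apply le_INR in Hn. rewrite !plus_INR, mult_INR in Hn. simpl (INR 2) in Hn. lra.
      * intros i _ U HU x Ux. subst U. exact Ux.
      * intros z Hz. exists 0%nat, (fun x : Xs => B (fXY x)). auto.
    + exists 0%R, (fun _ U => U = (fun x : Xs => B (fXY x))).
      split; [|split; [|split]].
      * intros i _ U V HU HV UV. exfalso. apply UV. congruence.
      * intros i _ U HU x y Ux Uy. subst U. exfalso. apply NB. eauto.
      * intros i _ U HU x Ux. subst U. exact Ux.
      * intros z Hz. exists 0%nat, (fun x : Xs => B (fXY x)). auto.
  - intro H. destruct (H 2%R ltac:(lra)) as [D [F [Hd [Hb [_ Hc]]]]].
    destruct (INR_unbounded D) as [N HN].
    assert (h0 : (0 <= N)%nat) by lia.
    destruct (Hc (exist _ (N, 0%nat) h0) I) as [i [U0 [Hi [HU0 HU0x]]]].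
    assert (i = 0%nat) by lia. subst i.
    assert (All : forall k (h : (k <= N)%nat), U0 (exist (fun p : nat * nat => (snd p <= fst p)%nat) (N, k) h)).
    { induction k as [|k IH]; intros h.
      - replace h with h0 by apply le_unique. exact HU0x.
      - assert (hk : (k <= N)%nat) by lia. specialize (IH hk).
        destruct (Hc (exist _ (N, S k) h) I) as [i [V [Hi' [HV HVx]]]].
        assert (i = 0%nat) by lia. subst i.
        destruct (classic (V = U0)) as [E|E]. { subst; exact HVx. }
        exfalso. pose proof (Hd 0%nat (le_n 0) V U0 HV HU0 E _ _ HVx IH) as Hfar.
        simpl in Hfar. unfold gX in Hfar; simpl in Hfar.
        replace (dn (N * N + S k) (N * N + k)) with 1%nat in Hfar by (unfold dn; lia).
        simpl in Hfar. lra. }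
    pose proof (Hb 0%nat (le_n 0) U0 HU0 _ _ HU0x (All N (le_n N))) as Hdiam.
    simpl in Hdiam. unfold gX in Hdiam; simpl in Hdiam.
    replace (dn (N * N + 0) (N * N + N)) with N in Hdiam by (unfold dn; lia).
    lra.
Qed.
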